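(* Consider the deterministic one-dimensional state equation $\dot X(s)=s\,u_1(s)+u_2(s)$, $s\in[0,1]$, $X(0)=x$, with controls $u_1,u_2\in L^2(0,1;\mathbb R)$, and the functional $J(x;u_1,u_2)=-|X(1)|^2+\int_0^1 s^2|u_1(s)|^2ds$. Then: (i) $J(0;u_1,0)\ge0$ for all $u_1$ and $J(0;0,u_2)\le0$ for all $u_2$; (ii) $(u_1,u_2)=(0,-1)$ is an open-loop saddle point of the game (Player 1 minimizing, Player 2 maximizing $J$) for $x=1$; (iii) for every $\varepsilon>0$, the game with functional $J_\varepsilon(x;u_1,u_2)=J(x;u_1,u_2)-\varepsilon\int_0^1|u_2(s)|^2ds$ (same state equation) has no open-loop saddle point for $x=1$.
   Context: An open-loop saddle point for initial state $x$ of a game with functional $\mathcal J$ is a pair $(u_1^*,u_2^* )$ with $\mathcal J(x;u_1^*,u_2)\le\mathcal J(x;u_1^*,u_2^* )\le\mathcal J(x;u_1,u_2^* )$ for all admissible $(u_1,u_2)$; here the admissible controls of both players are all real square-integrable functions on $[0,1]$. *)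

(* Defs.v *)
From HB Require Import structures.
From mathcomp Require Import all_boot all_order all_algebra.
From mathcomp Require Import all_classical all_reals all_analysis.
Set Implicit Arguments. Unset Strict Implicit. Unset Printing Implicit Defensive.
Import Order.TTheory GRing.Theory Num.Theory.
Local Open Scope classical_set_scope.
Local Open Scope ring_scope.

Section Game.
Variable R : realType.
Notation mu := (@lebesgue_measure R).
Let I01 : set R := `[0%R, 1%R].

(* admissible controls: real square-integrable functions on [0,1]
   (represented by functions R -> R; only values on [0,1] matter) *)
Definition L2 (u : R -> R) : Prop :=
  measurable_fun I01 u /\
  (\int[mu]_(s in I01) ((u s) ^+ 2)%:E < +oo)%E.

(* terminal state X(1) of dX/ds = s u1(s) + u2(s), X(0) = x *)
Definition Xend (x : R) (u1 u2 : R -> R) : R :=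
  x + Rintegral mu I01 (fun s => s * u1 s + u2 s).

Definition J (x : R) (u1 u2 : R -> R) : R :=
  - (Xend x u1 u2) ^+ 2 + Rintegral mu I01 (fun s => s ^+ 2 * (u1 s) ^+ 2).

Definition Jeps (eps : R) (x : R) (u1 u2 : R -> R) : R :=
  J x u1 u2 - eps * Rintegral mu I01 (fun s => (u2 s) ^+ 2).

Definition saddle (JJ : R -> (R -> R) -> (R -> R) -> R) (x : R)
    (u1s u2s : R -> R) : Prop :=
  L2 u1s /\ L2 u2s /\
  forall u1 u2, L2 u1 -> L2 u2 ->
    JJ x u1s u2 <= JJ x u1s u2s /\ JJ x u1s u2s <= JJ x u1 u2s.
End Game.

(* Main.v *)
Require Import Defs.
From HB Require Import structures.
From mathcomp Require Import all_boot all_order all_algebra.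
From mathcomp Require Import all_classical all_reals all_analysis.
From mathcomp Require Import ring lra measurable_realfun.
Import Order.TTheory GRing.Theory Num.Theory.
Set Implicit Arguments.
Local Open Scope ring_scope.

Section Helpers.
Variable R : realType.
Local Notation mu := (@lebesgue_measure R).
Local Notation I := (`[0%R, 1%R]%classic : set R).
Local Notation Int f := (mu.-integrable I (EFin \o f)).
Local Notation RI f := (Rintegral mu I f).

Lemma mI : measurable I.
Proof. exact: measurable_itv. Qed.

Lemma muI : mu I = 1%:E.
Proof. rewrite lebesgue_measure_itv /= lte_fin ltr01 /=. by rewrite -EFinD subr0. Qed.

Lemma RI_ext (f g : R -> R) : (forall s, f s = g s) -> RI f = RI g.
Proof. by move=> fg; congr Rintegral; apply/funext. Qed.

Lemma RI_cst (c : R) : RI (fun _ => c) = c.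
Proof. rewrite Rintegral_cst ?mI //. rewrite (_ : fine _ = 1) ?mulr1 //. exact: (congr1 fine muI). Qed.

Lemma L2_iff (f : R -> R) : L2 f <-> measurable_fun I f /\ Int (fun s => f s ^+ 2).
Proof.
split.
- move=> [mf fin]; split => //; apply/integrableP; split.
    by apply/measurable_EFinP; exact: measurable_funX.
  apply: le_lt_trans fin; rewrite le_eqVlt; apply/orP; left; apply/eqP.
  by apply: eq_integral => s _ /=; rewrite ger0_norm // sqr_ge0.
- move=> [mf /integrableP [_ fin]]; split => //.
  apply: le_lt_trans fin; rewrite le_eqVlt; apply/orP; left; apply/eqP.
  by apply: eq_integral => s _ /=; rewrite ger0_norm // sqr_ge0.
Qed.


Lemma Int_le (f g : R -> R) : measurable_fun I f ->
  (forall s, I s -> `|f s| <= g s) -> Int g -> Int f.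
Proof.
move=> mf fg ig; apply: (@le_integrable _ _ _ mu _ mI (EFin \o f) (EFin \o g) _ _ ig).
  exact/measurable_EFinP.
move=> s Is /=; rewrite lee_fin (le_trans (fg s Is)) //; exact: ler_norm.
Qed.

Lemma Int_ext (f g : R -> R) : Int f -> (forall s, f s = g s) -> Int g.
Proof. by move=> i1 fg; rewrite (_ : g = f) //; apply/funext => s; rewrite fg. Qed.

Lemma Int_add (f g : R -> R) : Int f -> Int g -> Int (fun s => f s + g s).
Proof.
move=> i1 i2; apply: (@eq_integrable _ _ _ mu _ mI _ _ _ (@integrableD _ _ _ mu _ mI _ _ i1 i2)) => s _ /=.
by rewrite EFinD.
Qed.

Lemma Int_scale (c : R) (f : R -> R) : Int f -> Int (fun s => c * f s).
Proof.
move=> i1; apply: (@eq_integrable _ _ _ mu _ mI _ _ _ (@integrableZl _ _ _ mu _ mI c _ i1)) => s _ /=.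
by rewrite EFinM.
Qed.

Lemma Int_cst (c : R) : Int (fun _ => c).
Proof.
apply: (@measurable_bounded_integrable _ _ _ mu (fun _ => c) I mI).
- by change (mu I < +oo)%E; rewrite muI ltry.
- exact: measurable_cst.
- exact: bounded_cst.
Qed.

Lemma L2_meas f : L2 f -> measurable_fun I f.
Proof. by case/L2_iff. Qed.

Lemma L2_sq f : L2 f -> Int (fun s => f s ^+ 2).
Proof. by case/L2_iff. Qed.

Lemma L2_mul (f g : R -> R) : L2 f -> L2 g -> Int (fun s => f s * g s).
Proof.
move=> /L2_iff [mf if2] /L2_iff [mg ig2].
apply: (@Int_le _ (fun s => f s ^+ 2 + g s ^+ 2)).
- exact: measurable_funM.
- move=> s _; rewrite normrM.
  have := sqr_ge0 (`|f s| - `|g s|).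
  rewrite -(real_normK (num_real (f s))) -(real_normK (num_real (g s))).
  have := normr_ge0 (f s); have := normr_ge0 (g s).
  move: `|f s| `|g s| => a b; nra.
- exact: Int_add.
Qed.

Lemma L2_cst (c : R) : L2 (fun _ => c).
Proof. apply/L2_iff; split; [exact: measurable_cst | exact: Int_cst]. Qed.

Lemma L2_Int f : L2 f -> Int f.
Proof.
move=> h; have := L2_mul (L2_cst 1) h.
by move/Int_ext; apply => s; rewrite mul1r.
Qed.

Lemma L2_add (f g : R -> R) : L2 f -> L2 g -> L2 (fun s => f s + g s).
Proof.
move=> hf hg; apply/L2_iff; split.
  by apply: measurable_funD; exact: L2_meas.
have := Int_add (Int_add (L2_sq hf) (Int_scale 2 (L2_mul hf hg))) (L2_sq hg).
by move/Int_ext; apply => s; ring.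
Qed.

Lemma L2_scale (c : R) (f : R -> R) : L2 f -> L2 (fun s => c * f s).
Proof.
move=> hf; apply/L2_iff; split.
  by apply: measurable_funM; [exact: measurable_cst | exact: L2_meas hf].
have := Int_scale (c ^+ 2) (L2_sq hf).
by move/Int_ext; apply => s; ring.
Qed.

Lemma L2_bddmul (h f : R -> R) : measurable_fun I h ->
  (forall s, I s -> `|h s| <= 1) -> L2 f -> L2 (fun s => h s * f s).
Proof.
move=> mh hb hf; apply/L2_iff; split.
  by apply: measurable_funM => //; exact: L2_meas.
apply: (@Int_le _ (fun s => f s ^+ 2)) (L2_sq hf).
  by apply: measurable_funX; apply: measurable_funM => //; exact: L2_meas.
move=> s Is; rewrite ger0_norm ?sqr_ge0 // exprMn.
have /ler_normlP [h1 h2] := hb s Is.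
have hh : h s ^+ 2 <= 1 by nra.
have := sqr_ge0 (f s); move: (h s ^+ 2) (f s ^+ 2) hh => a b; nra.
Qed.

Lemma RI_add (f g : R -> R) : Int f -> Int g -> RI (fun s => f s + g s) = RI f + RI g.
Proof. by move=> i1 i2; rewrite (@RintegralD _ _ _ mu _ f g mI i1 i2). Qed.

Lemma RI_scale (c : R) (f : R -> R) : Int f -> RI (fun s => c * f s) = c * RI f.
Proof. by move=> i1; rewrite (@RintegralZl _ _ _ mu _ f c mI i1). Qed.

Lemma RI_ge0 (f : R -> R) : (forall s, I s -> 0 <= f s) -> 0 <= RI f.
Proof. by move=> h; apply: Rintegral_ge0. Qed.

Lemma RI_le (f g : R -> R) : Int f -> Int g -> (forall s, I s -> f s <= g s) ->
  RI f <= RI g.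
Proof. by move=> i1 i2 h; apply: (@le_Rintegral _ _ _ mu _ f g mI i1 i2 h). Qed.

Lemma quad (a b c : R) : 0 <= c -> (forall t, 0 <= a + 2 * b * t + c * t ^+ 2) ->
  b ^+ 2 <= a * c.
Proof.
move=> c0 H; have a0 : 0 <= a by have := H 0; rewrite !mulr0 expr0n /= mulr0 !addr0.
have [cpos|cz] : 0 < c \/ c = 0.
  by move: c0; rewrite le_eqVlt => /orP [/eqP ->|->]; [right|left].
2: { subst c.
  case: (eqVneq b 0) => [->|bn0]; first by rewrite expr0n /= mulr0.
  set t := - (a + 1) / (2 * b).
  have e : 2 * b * t = - (a + 1).
    by rewrite /t mulrC divfK // mulf_neq0 // pnatr_eq0.
  have := H t; rewrite e mul0r addr0 => h.
  lra. }
have := H (- b / c); set t := - b / c => Ht.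
have e : c * t = - b by rewrite /t mulrC divfK // gt_eqF.
nra.
Qed.

Lemma quad0 (b c : R) : (forall t, 0 <= 2 * b * t + c * t ^+ 2) -> b = 0.
Proof.
move=> H; set K := `|c| + 1.
have Kpos : 0 < K by rewrite /K ltr_pwDr // normr_ge0.
have cK : c < K by rewrite /K (le_lt_trans (ler_norm c)) // ltrDl.
set u := b / K.
have bu : b = K * u by rewrite /u mulrC divfK // gt_eqF.
have := H (- u); rewrite bu => Hu.
have u0 : u ^+ 2 * (2 * K - c) <= 0 by nra.
have : u ^+ 2 <= 0 by nra.
move=> u20; have : u = 0 by apply/eqP; rewrite -sqrf_eq0 eq_le u20 sqr_ge0.
by move=> ->; rewrite mulr0.
Qed.

Lemma CS (f g : R -> R) : L2 f -> L2 g ->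
  RI (fun s => f s * g s) ^+ 2 <= RI (fun s => f s ^+ 2) * RI (fun s => g s ^+ 2).
Proof.
move=> hf hg; apply: quad; first by apply: RI_ge0 => s _; exact: sqr_ge0.
move=> t.
have -> : RI (fun s => f s ^+ 2) + 2 * RI (fun s => f s * g s) * t +
   RI (fun s => g s ^+ 2) * t ^+ 2 = RI (fun s => (f s + t * g s) ^+ 2).
  rewrite (@RI_ext (fun s => (f s + t * g s) ^+ 2) (fun s => (f s ^+ 2 + (2 * t) * (f s * g s)) + t ^+ 2 * g s ^+ 2)); last first.
    by move=> s; ring.
  rewrite RI_add; last 2 first.
  - by apply: Int_add; [exact: L2_sq | apply: Int_scale; exact: L2_mul].
  - by apply: Int_scale; exact: L2_sq.
  rewrite RI_add; last 2 first.
  - exact: L2_sq.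
  - by apply: Int_scale; exact: L2_mul.
  rewrite (RI_scale (2 * t) (L2_mul hf hg)) (RI_scale (t ^+ 2) (L2_sq hg)).
  ring.
by apply: RI_ge0 => s _; exact: sqr_ge0.
Qed.

Lemma L2_sm (u : R -> R) : L2 u -> L2 (fun s => s * u s).
Proof.
apply: L2_bddmul; first exact: measurable_id.
by move=> s; rewrite /= in_itv /= => /andP [s0 s1]; rewrite ger0_norm.
Qed.

Lemma RI_ind (a b : R) : 0 <= a -> a <= b -> b <= 1 ->
  RI (\1_(`[a, b]%classic : set R) : R -> R) = b - a.
Proof.
move=> a0 ab b1; rewrite /Rintegral.
rewrite (@integral_indic _ _ _ mu _ mI); last exact: measurable_itv.
rewrite setIidl; last first.
  move=> s; rewrite /= !in_itv /= => /andP [h1 h2].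
  by rewrite (le_trans a0 h1) (le_trans h2 b1).
change (fine (mu `[a, b]%classic) = b - a).
rewrite lebesgue_measure_itv /=.
case: ifPn => [_|]; first by rewrite -EFinD.
rewrite lte_fin -leNgt => ba; have -> : b = a by apply/eqP; rewrite eq_le ab ba.
by rewrite subrr.
Qed.

Lemma L2_ext (f g : R -> R) : L2 f -> (forall s, f s = g s) -> L2 g.
Proof. by move=> i1 fg; rewrite (_ : g = f) //; apply/funext => s; rewrite fg. Qed.

Lemma RI_zero (f : R -> R) : (forall s, f s = 0) -> RI f = 0.
Proof. by move=> h; rewrite (@RI_ext f (fun _ => 0)) // RI_cst. Qed.

Lemma Xend_eq x u1 u2 : L2 u1 -> L2 u2 ->
  Xend x u1 u2 = x + RI (fun s => s * u1 s) + RI u2.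
Proof.
move=> h1 h2; rewrite /Xend (RI_add (L2_Int (L2_sm h1)) (L2_Int h2)).
by rewrite addrA.
Qed.

Lemma J_eq x u1 u2 : J x u1 u2 = - (Xend x u1 u2) ^+ 2 + RI (fun s => (s * u1 s) ^+ 2).
Proof. by rewrite /J; congr (_ + _); apply: RI_ext => s; rewrite exprMn. Qed.

Lemma Jeps_eq eps x u1 u2 : L2 u1 -> L2 u2 ->
  Jeps eps x u1 u2 = - (x + RI (fun s => s * u1 s) + RI u2) ^+ 2
     + RI (fun s => (s * u1 s) ^+ 2) - eps * RI (fun s => u2 s ^+ 2).
Proof. by move=> h1 h2; rewrite /Jeps J_eq Xend_eq. Qed.

Lemma keyCS u : L2 u -> RI (fun s => s * u s) ^+ 2 <= RI (fun s => (s * u s) ^+ 2).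
Proof.
move=> h; have := CS (L2_cst 1) (L2_sm h).
have e1 : RI (fun s => 1 * (s * u s)) = RI (fun s => s * u s).
  by apply: RI_ext => s; rewrite mul1r.
have e2 : RI (fun _ : R => (1 : R) ^+ 2) = 1 by rewrite expr1n RI_cst.
by rewrite e1 e2 mul1r.
Qed.

Lemma L2_ind (a b : R) : L2 (\1_(`[a, b]%classic : set R) : R -> R).
Proof.
apply: (@L2_ext (fun s => \1_(`[a, b]%classic : set R) s * 1)).
  apply: L2_bddmul; last exact: L2_cst.
    by apply: measurable_indic; exact: measurable_itv.
  by move=> s _; rewrite indicE; case: (_ \in _); rewrite ?normr1 ?normr0.
by move=> s; rewrite mulr1.
Qed.

Lemma ind_cases (a b s : R) :
  ((\1_(`[a, b]%classic : set R) : R -> R) s = 1 /\ a <= s <= b) \/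
  (\1_(`[a, b]%classic : set R) : R -> R) s = 0.
Proof.
rewrite indicE; case: (boolP (s \in _)) => [sin|_]; last by right.
left; split => //; move: sin; rewrite inE /=.
by rewrite in_itv.
Qed.

Lemma step1 eps p q : L2 p -> L2 q ->
  (forall u1, L2 u1 -> Jeps eps 1 p q <= Jeps eps 1 u1 q) ->
  1 + RI (fun s => s * p s) + RI q = 0.
Proof.
move=> hp hq H.
set A := RI (fun s => s * p s); set m := RI q; set D := 1 + A + m.
set C := RI (fun s => p s ^+ 2); set B := RI (fun s => (s * p s) ^+ 2).
set Q := RI (fun s => q s ^+ 2).
have C0 : 0 <= C by apply: RI_ge0 => s _; exact: sqr_ge0.
have key : forall d, 0 < d -> 2 * d <= 1 -> D ^+ 2 <= 16 * C * d.
  move=> d d0 d1.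
  set v := (\1_(`[d, 2 * d]%classic : set R) : R -> R).
  have hv : L2 v := L2_ind d (2 * d).
  set a1 := RI (fun s => s * v s).
  set b1 := RI (fun s => (s * p s) * (s * v s)).
  set b2 := RI (fun s => (s * v s) ^+ 2).
  have fo : b1 - D * a1 = 0.
    apply: (@quad0 _ (b2 - a1 ^+ 2)) => t.
    have hu : L2 (fun s => p s + t * v s) := L2_add hp (L2_scale t hv).
    have := H _ hu; rewrite !Jeps_eq //.
    have e1 : RI (fun s => s * (p s + t * v s)) = A + t * a1.
      rewrite (@RI_ext (fun s => s * (p s + t * v s)) (fun s => s * p s + t * (s * v s))); last by move=> s; ring.
      rewrite (RI_add (L2_Int (L2_sm hp)) (Int_scale t (L2_Int (L2_sm hv)))).
      by rewrite (RI_scale t (L2_Int (L2_sm hv))).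
    have e2 : RI (fun s => (s * (p s + t * v s)) ^+ 2) = B + 2 * t * b1 + t ^+ 2 * b2.
      rewrite (@RI_ext (fun s => (s * (p s + t * v s)) ^+ 2)
        (fun s => ((s * p s) ^+ 2 + (2 * t) * ((s * p s) * (s * v s))) + t ^+ 2 * (s * v s) ^+ 2)); last by move=> s; ring.
      have i1 := L2_sq (L2_sm hp); have i2 := L2_mul (L2_sm hp) (L2_sm hv).
      have i3 := L2_sq (L2_sm hv).
      rewrite (RI_add (Int_add i1 (Int_scale (2 * t) i2)) (Int_scale (t ^+ 2) i3)).
      rewrite (RI_add i1 (Int_scale (2 * t) i2)).
      by rewrite (RI_scale (2 * t) i2) (RI_scale (t ^+ 2) i3).
    rewrite e1 e2 -/A -/m -/B -/Q -subr_ge0 => h.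
    apply: (le_trans h); rewrite le_eqVlt; apply/orP; left; apply/eqP.
    rewrite /D; ring.
  have ha1 : d * d <= a1.
    have := @RI_le (fun s => d * v s) (fun s => s * v s) (Int_scale d (L2_Int hv)) (L2_Int (L2_sm hv)).
    rewrite (RI_scale d (L2_Int hv)) /v RI_ind; last 3 first.
    - exact: ltW.
    - by rewrite ler_pMl // ler1n.
    - exact: d1.
    have -> : 2 * d - d = d by ring.
    apply => s _; case: (ind_cases d (2 * d) s) => [[-> /andP [h1 h2]]|->].
      by rewrite !mulr1.
    by rewrite !mulr0.
  have hb1 : b1 ^+ 2 <= C * (16 * d ^+ 4 * d).
    have cs := CS hp (L2_sm (L2_sm hv)).
    have eb : b1 = RI (fun s => p s * (s * (s * v s))).
      by apply: RI_ext => s; ring.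
    rewrite eb; apply: (le_trans cs); apply: ler_wpM2l => //.
    have := @RI_le (fun s => (s * (s * v s)) ^+ 2) (fun s => (16 * d ^+ 4) * v s)
      (L2_sq (L2_sm (L2_sm hv))) (Int_scale _ (L2_Int hv)).
    rewrite (RI_scale _ (L2_Int hv)) /v RI_ind; last 3 first.
    - exact: ltW.
    - by rewrite ler_pMl // ler1n.
    - exact: d1.
    have -> : 2 * d - d = d by ring.
    apply => s; rewrite /= in_itv /= => /andP [s0 s1].
    case: (ind_cases d (2 * d) s) => [[-> /andP [h1 h2]]|->]; last first.
      by rewrite !mulr0 expr0n.
    rewrite !mulr1.
    have hs2 : s ^+ 2 <= 4 * d ^+ 2 by nra.
    have hs0 : 0 <= s ^+ 2 by exact: sqr_ge0.
    have -> : (s * s) ^+ 2 = (s ^+ 2) ^+ 2 by ring.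
    have -> : 16 * d ^+ 4 = (4 * d ^+ 2) ^+ 2 by ring.
    move: (s ^+ 2) (4 * d ^+ 2) hs2 hs0 => x y; nra.
  have h4 : d ^+ 4 <= a1 ^+ 2.
    have dd0 : 0 <= d * d by nra.
    have -> : d ^+ 4 = (d * d) ^+ 2 by ring.
    move: (d * d) ha1 dd0 => x; nra.
  have hb : b1 = D * a1 by apply/eqP; rewrite -subr_eq0 fo.
  have h5 : D ^+ 2 * d ^+ 4 <= 16 * C * d * d ^+ 4.
    apply: (le_trans (ler_wpM2l (sqr_ge0 D) h4)).
    rewrite -exprMn -hb; apply: (le_trans hb1).
    rewrite le_eqVlt; apply/orP; left; apply/eqP; ring.
  by move: h5; rewrite ler_pM2r // exprn_gt0.
case: (eqVneq D 0) => [//|Dn0].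
have x0 : 0 < D ^+ 2 by rewrite lt_def sqrf_eq0 Dn0 sqr_ge0.
set K := 32 * C + 2 * D ^+ 2 + 2.
have K0 : 0 < K by rewrite /K; lra.
have := key (D ^+ 2 / K).
rewrite divr_gt0 // => /(_ isT).
have hK : D ^+ 2 / K * K = D ^+ 2 by rewrite divfK // gt_eqF.
have -> : 2 * (D ^+ 2 / K) <= 1.
  rewrite -(ler_pM2r K0) mul1r -mulrA hK /K; lra.
move=> /(_ isT) h.
have h' : D ^+ 2 * K <= 16 * C * D ^+ 2.
  move: h; rewrite -(ler_pM2r K0) => h2; apply: (le_trans h2); by rewrite -mulrA hK.
move: h'; rewrite /K; move: (D ^+ 2) x0 => x x0 h'; nra.
Qed.

End Helpers.

Local Notation RIR R f := (Rintegral (@lebesgue_measure R) (`[0%R, 1%R]%classic : set R) f).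

Theorem mainTheorem10 (R : realType) :
  ((forall u1 : R -> R, L2 u1 -> 0 <= J 0 u1 (fun _ => 0)) /\
   (forall u2 : R -> R, L2 u2 -> J 0 (fun _ => 0) u2 <= 0)) /\
  saddle (@J R) 1 (fun _ => 0) (fun _ => -1) /\
  (forall eps : R, 0 < eps ->
     ~ exists u1 u2 : R -> R, saddle (Jeps eps) 1 u1 u2).
Proof.
have Z1 : Rintegral (@lebesgue_measure R) (`[0%R, 1%R]%classic : set R)
    (fun s => (s * 0) ^+ 2) = 0.
  by apply: RI_zero => s; rewrite mulr0 expr0n.
have Z2 : Rintegral (@lebesgue_measure R) (`[0%R, 1%R]%classic : set R)
    (fun s => s * 0) = 0.
  by apply: RI_zero => s; rewrite mulr0.
split; [split|split].
- move=> u1 h; rewrite J_eq Xend_eq //; last exact: L2_cst.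
  rewrite RI_cst add0r addr0.
  have := keyCS h.
  move: (RIR R (fun s => s * u1 s)) (RIR R (fun s => (s * u1 s) ^+ 2)) => a b.
  lra.
- move=> u2 h; rewrite J_eq Z1 addr0 oppr_le0; exact: sqr_ge0.
- split; first exact: L2_cst.
  split; first exact: L2_cst.
  move=> u1 u2 h1 h2.
  have X0 : Xend 1 (fun _ => 0) (fun _ => -1) = 0 :> R.
    by rewrite Xend_eq ?Z2 ?RI_cst; [rewrite addr0 subrr | exact: L2_cst..].
  split.
  + rewrite !J_eq X0 Z1 expr0n /= oppr0 add0r addr0 oppr_le0; exact: sqr_ge0.
  + rewrite !J_eq X0 Z1 Xend_eq //; last exact: L2_cst.
    rewrite RI_cst expr0n /= oppr0 add0r.
    have := keyCS h1.
    move: (RIR R (fun s => s * u1 s)) (RIR R (fun s => (s * u1 s) ^+ 2)) => a b.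
    have -> : 1 + a + -1 = a by ring.
    lra.
- move=> eps eps0 [p [q [hp [hq H]]]].
  have H1 : forall u1, L2 u1 -> Jeps eps 1 p q <= Jeps eps 1 u1 q.
    by move=> u1 h; exact: (H u1 q h hq).2.
  have D0 := @step1 R eps p q hp hq H1.
  have B0 : 0 <= Rintegral (@lebesgue_measure R) (`[0%R, 1%R]%classic : set R)
    (fun s => (s * p s) ^+ 2) by apply: RI_ge0 => s _; exact: sqr_ge0.
  have m1 : 1 + Rintegral (@lebesgue_measure R) (`[0%R, 1%R]%classic : set R) q = 0.
    have := H1 _ (@L2_cst R 0); rewrite !Jeps_eq //; last exact: L2_cst.
    rewrite D0 Z1 Z2 addr0 expr0n /= oppr0 add0r.
    move: B0; move: (RIR R (fun s => (s * p s) ^+ 2)) => B B0.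
    move: (RIR R q) => m.
    move: (RIR R (fun s => q s ^+ 2)) => Q; rewrite addr0 => h.
    have h2 : (1 + m) ^+ 2 <= 0 by lra.
    by apply/eqP; rewrite -sqrf_eq0 eq_le h2 sqr_ge0.
  set t := eps / (1 + eps).
  have et : (1 + eps) * t = eps by rewrite /t mulrC divfK // gt_eqF // ltr_wpDr // ltW.
  have t0 : 0 < t by rewrite /t divr_gt0 // ltr_wpDr // ltW.
  have hu : L2 (fun s => q s + t) := L2_add hq (L2_cst _ t).
  have := (H p _ hp hu).1; rewrite !Jeps_eq //.
  have e1 : RIR R (fun s => q s + t) = RIR R q + t.
    by rewrite (RI_add (L2_Int hq) (Int_cst _ t)) RI_cst.
  have e2 : RIR R (fun s => (q s + t) ^+ 2) =
      RIR R (fun s => q s ^+ 2) + 2 * t * RIR R q + t ^+ 2.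
    rewrite (@RI_ext _ (fun s => (q s + t) ^+ 2)
      (fun s => (q s ^+ 2 + (2 * t) * q s) + t ^+ 2)); last by move=> s; ring.
    rewrite (RI_add (Int_add (L2_sq hq) (Int_scale (2 * t) (L2_Int hq))) (Int_cst _ (t ^+ 2))).
    by rewrite (RI_add (L2_sq hq) (Int_scale (2 * t) (L2_Int hq))) RI_cst
      (RI_scale (2 * t) (L2_Int hq)).
  rewrite e1 e2.
  move: D0 m1; move: (RIR R (fun s => s * p s)) (RIR R q) (RIR R (fun s => (s * p s) ^+ 2))
    (RIR R (fun s => q s ^+ 2)) => A m B Q D0 m1.
  have Am : A = 0 by lra.
  have mm : m = -1 by lra.
  rewrite Am mm => h.
  have h3 : t * eps <= 0.
    have -> : t * eps = t * (2 * eps - (1 + eps) * t) by rewrite et; ring.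
    move: h; rewrite -subr_ge0 => h.
    rewrite -oppr_ge0; apply: (le_trans h); rewrite le_eqVlt; apply/orP; left; apply/eqP.
    ring.
  have : 0 < t * eps by rewrite mulr_gt0.
  by rewrite ltNge h3.
Qed.
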